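(* Let $\Lambda_i\in\mathcal H_I$, $i\in[n]$, $\mathbb P$ atomless, and $Y\ge0$ a random variable with $1<\mathbb E^{\mathbb P}(Y)<\infty$. If $\overline\Lambda^*$ is attainable, then for all $X\in\mathcal X$ $$\mathop{\square}_{i=1}^n\sup_{\mathbb Q\in\mathcal P(\mathbb P,0,Y)}\Lambda_i\mathrm{VaR}^{\mathbb Q}(X)=\inf\{x\in\mathbb R:\mathbb E^{\mathbb P}(Y\mathds 1_{\{X>x\}})\le\overline\Lambda^*(x)\}.$$ If moreover the right-hand side equals a finite value $x^*$ and $\overline\Lambda^*$ is right-continuous at $x^*$, then an optimal allocation is $X_i=(X-x^* )\mathds 1_{A_i^*}+y_i^*$, where $(y_1^*,\dots,y_n^* )$ satisfies $\sum_iy_i^*=x^*$ and $\sum_i\Lambda_i(y_i^* )=\overline\Lambda^*(x^* )$, and $(A_1^*,\dots,A_n^* )\in\Pi_n(\Omega)$ satisfies $\mathbb E^{\mathbb P}(Y\mathds 1_{\{X>x^*\}\cap A_i^*})\le\Lambda_i(y_i^* )$ for all $i$ (such objects exist).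
   Context: $\Lambda\mathrm{VaR}^{\mathbb Q}(X)=\inf\{x\in\mathbb R:\mathbb Q(X>x)\le\Lambda(x)\}$; $\mathcal H_I$: increasing functions $\mathbb R\to(0,1)$. $\mathcal P(\mathbb P,0,Y)=\{\mathbb Q\ll\mathbb P: 0\le\mathrm d\mathbb Q/\mathrm d\mathbb P\le Y\}$. $\overline\Lambda^*(x)=\sup_{y_1+\dots+y_n=x}\sum_{i=1}^n\Lambda_i(y_i)$; it is attainable if for each $x\in\mathbb R$ the supremum is attained by some $(y_1,\dots,y_n)$ with $\sum_iy_i=x$. Inf-convolution $\mathop{\square}_i\rho_i(X)=\inf\{\sum_i\rho_i(X_i):X_i\in\mathcal X,\sum_iX_i=X\}$, $\mathcal X$ a set of real-valued random variables containing constants, closed under sums, differences, multiplication by indicators. $\Pi_n(\Omega)$: measurable partitions into $n$ sets. *)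

(* Defs.v *)
From mathcomp Require Import all_boot all_order all_algebra.
From mathcomp Require Import all_classical all_reals all_analysis.
Set Implicit Arguments. Unset Strict Implicit. Unset Printing Implicit Defensive.
Import Order.TTheory GRing.Theory Num.Theory.
Import numFieldNormedType.Exports.
Local Open Scope classical_set_scope.
Local Open Scope ring_scope.

Section Defs.
Context {d : measure_display} {T : measurableType d} {R : realType}.

Definition HI (L : R -> R) : Prop :=
  {homo L : x y / x <= y} /\ (forall x, 0 < L x < 1).

Definition atomless (P : probability T R) : Prop :=
  forall A, measurable A -> (0 < P A)%E ->
    exists B, [/\ measurable B, B `<=` A & (0 < P B < P A)%E].

(* P(P,0,Y): probability measures Q << P with 0 <= dQ/dP <= Y *)
Definition PY (P : probability T R) (Y : T -> R) : set (probability T R) :=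
  [set Q : probability T R | exists f : T -> R,
    [/\ measurable_fun setT f, (forall w, 0 <= f w <= Y w) &
        forall A, measurable A -> (Q A = \int[P]_(w in A) (f w)%:E)%E]].

Definition LVaR (L : R -> R) (Q : probability T R) (X : T -> R) : \bar R :=
  ereal_inf [set x%:E | x in [set x : R | (Q [set w | (x < X w)%R] <= (L x)%:E)%E]].

Definition rhoY (L : R -> R) (P : probability T R) (Y : T -> R) (X : T -> R)
  : \bar R := ereal_sup [set LVaR L Q X | Q in PY P Y].

Definition admissible_class (Xs : set (T -> R)) : Prop :=
  [/\ (forall X, Xs X -> measurable_fun setT X),
      (forall c : R, Xs (cst c)),
      (forall X Z, Xs X -> Xs Z -> Xs (X \+ Z)),
      (forall X Z, Xs X -> Xs Z -> Xs (X \- Z)) &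
      (forall X A, Xs X -> measurable A -> Xs (X \* \1_A))].

Definition allocation (Xs : set (T -> R)) (n : nat) (X : T -> R)
  (Xi : 'I_n -> T -> R) : Prop :=
  (forall i, Xs (Xi i)) /\ (forall w, \sum_(i < n) Xi i w = X w).

Definition infconv (Xs : set (T -> R)) (n : nat)
  (rho : 'I_n -> (T -> R) -> \bar R) (X : T -> R) : \bar R :=
  ereal_inf [set (\sum_(i < n) rho i (Xi i))%E | Xi in allocation Xs X].

Definition optimal_allocation (Xs : set (T -> R)) (n : nat)
  (rho : 'I_n -> (T -> R) -> \bar R) (X : T -> R) (Xi : 'I_n -> T -> R) : Prop :=
  allocation Xs X Xi /\ (\sum_(i < n) rho i (Xi i))%E = infconv Xs rho X.

Definition partition_n (n : nat) (A : 'I_n -> set T) : Prop :=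
  [/\ (forall i, measurable (A i)),
      (forall i j, i != j -> A i `&` A j = set0) &
      \bigcup_(i in [set: 'I_n]) A i = setT].

Definition rhsVaR (P : probability T R) (Y X : T -> R) (Lb : R -> R) : \bar R :=
  ereal_inf [set x%:E | x in [set x : R |
     (\int[P]_(w in [set w | (x < X w)%R]) (Y w)%:E <= (Lb x)%:E)%E]].

End Defs.

Definition Lbar {R : realType} (n : nat) (L : 'I_n -> R -> R) (x : R) : R :=
  sup [set s : R | exists y : 'I_n -> R,
         \sum_(i < n) y i = x /\ s = \sum_(i < n) L i (y i)].

Definition attainable {R : realType} (n : nat) (L : 'I_n -> R -> R) : Prop :=
  forall x : R, exists y : 'I_n -> R,
    \sum_(i < n) y i = x /\ \sum_(i < n) L i (y i) = Lbar L x.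

(* Main.v *)
From HB Require Import structures.
Require Import Defs.
From mathcomp Require Import all_boot all_order all_algebra.
From mathcomp Require Import all_classical all_reals all_analysis.
From mathcomp Require Import measurable_realfun.
From mathcomp Require Import ring lra.
Set Implicit Arguments. Unset Strict Implicit. Unset Printing Implicit Defensive.
Import Order.TTheory GRing.Theory Num.Theory Num.Def.
Import numFieldNormedType.Exports.
Local Open Scope classical_set_scope.
Local Open Scope ring_scope.

Lemma mlt d (T : measurableType d) (R : realType) (f : T -> R) (x : R) :
  measurable_fun setT f -> measurable [set w | x < f w].
Proof.
move=> mf; rewrite -preimage_itvoy -[_ @^-1` _]setTI.
by apply: mf => //; exact: measurable_itv.
Qed.

Section finm.
Context d (T : measurableType d) (R : realType) (m : {measure set T -> \bar R}).
Hypothesis mfin : (m setT < +oo)%E.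

Definition mr (A : set T) : R := fine (m A).

Lemma m_fin A : measurable A -> m A \is a fin_num.
Proof.
move=> mA; rewrite ge0_fin_numE ?measure_ge0//.
by apply: le_lt_trans mfin; rewrite le_measure ?inE.
Qed.

Lemma mrE A : measurable A -> m A = (mr A)%:E.
Proof. by move=> mA; rewrite /mr fineK// m_fin. Qed.

Lemma mr_ge0 A : 0 <= mr A.
Proof. by rewrite /mr fine_ge0// measure_ge0. Qed.

Lemma mr_le A B : measurable A -> measurable B -> A `<=` B -> mr A <= mr B.
Proof.
move=> mA mB AB; rewrite -lee_fin -mrE// -mrE//.
by rewrite le_measure ?inE.
Qed.



Lemma mr_DI A B : measurable A -> measurable B ->
  mr A = mr (A `\` B) + mr (A `&` B).
Proof.
move=> mA mB; apply: EFin_inj.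
rewrite EFinD -(mrE mA) -(mrE (measurableD mA mB)) -(mrE (measurableI _ _ mA mB)).
exact: measureDI.
Qed.

Lemma mr_U A B : measurable A -> measurable B -> A `&` B = set0 ->
  mr (A `|` B) = mr A + mr B.
Proof.
move=> mA mB AB0; apply: EFin_inj.
rewrite EFinD -(mrE mA) -(mrE mB) -(mrE (measurableU _ _ mA mB)).
exact: measureU.
Qed.

Lemma mr0 : mr set0 = 0.
Proof. by rewrite /mr measure0. Qed.


Lemma mr_setD A B : measurable A -> measurable B -> B `<=` A ->
  mr (A `\` B) = mr A - mr B.
Proof.
move=> mA mB BA; rewrite (mr_DI mA mB) (setIidr BA); lra.
Qed.

Hypothesis atom : forall A, measurable A -> 0 < mr A ->
  exists B, [/\ measurable B, B `<=` A & 0 < mr B < mr A].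

Lemma small_half A : measurable A -> 0 < mr A ->
  exists B, [/\ measurable B, B `<=` A, 0 < mr B & mr B * 2 <= mr A].
Proof.
move=> mA A0; have [B [mB BA /andP[B0 BA']]] := atom mA A0.
have [h|h] := leP (mr B * 2) (mr A); first by exists B.
exists (A `\` B); split => //; first exact: measurableD.
  by rewrite mr_setD//; lra.
by rewrite mr_setD//; lra.
Qed.

Lemma small_pow A : measurable A -> 0 < mr A -> forall k,
  exists B, [/\ measurable B, B `<=` A, 0 < mr B & mr B * 2 ^+ k <= mr A].
Proof.
move=> mA A0; elim=> [|k [B [mB BA B0 Bk]]].
  by exists A; split => //; rewrite expr0 mulr1.
have [C [mC CB C0 C2]] := small_half mB B0.
exists C; split => //; first exact: subset_trans CB BA.
rewrite exprS mulrA; apply: le_trans Bk.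
by rewrite ler_wpM2r// exprn_ge0.
Qed.

Lemma small_eps A e : measurable A -> 0 < mr A -> 0 < e ->
  exists B, [/\ measurable B, B `<=` A, 0 < mr B & mr B < e].
Proof.
move=> mA A0 e0.
pose k := truncn (mr A / e).
have hk : mr A / e < k.+1%:R by exact: truncnS_gt.
have h2 : (k.+1%:R : R) <= 2 ^+ k.+1.
  by rewrite -natrX ler_nat; apply: ltnW; exact: ltn_expl.
have [B [mB BA B0 Bk]] := small_pow mA A0 k.+1.
exists B; split => //.
have hA : mr A < e * 2 ^+ k.+1.
  by rewrite -ltr_pdivrMl// mulrC; apply: lt_le_trans hk h2.
rewrite -(@ltr_pM2r _ (2 ^+ k.+1)) ?exprn_gt0//.
by apply: le_lt_trans Bk hA.
Qed.

Section ivt.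
Variables (S : set T) (a : R).
Hypothesis mS : measurable S.

Definition adm (B D : set T) :=
  [/\ measurable D, D `<=` S `\` B & mr B + mr D <= a].

Lemma step_ex (B : set T) : exists D : set T,
  measurable B -> mr B <= a -> adm B D /\
  (forall D', adm B D' -> mr D' <= 2 * mr D).
Proof.
have [hB|hB] := pselect (measurable B /\ mr B <= a); last first.
  by exists set0 => mB Ba; exfalso; apply: hB.
case: hB => mB Ba.
pose E := [set mr D' | D' in adm B].
have E0 : E 0 by exists set0; [split=> //; rewrite mr0 addr0|exact: mr0].
have Eub : ubound E (a - mr B).
  by move=> _ [D' [_ _ h] <-]; lra.
have hs : has_sup E by split; [exists 0|exists (a - mr B)].
have s0 : 0 <= sup E by apply: sup_upper_bound.
have [sE|sE] := eqVneq (sup E) 0.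
  exists set0 => _ _; split; first by split=> //; rewrite mr0 addr0.
  move=> D' hD'; rewrite mr0 mulr0 -sE; apply: sup_upper_bound => //.
  by exists D'.
have sp : 0 < sup E by rewrite lt_neqAle eq_sym sE.
have [_ [D hD <-] hD2] := sup_adherent (divr_gt0 sp (ltr0n _ 2)) hs.
exists D => _ _; split => // D' hD'.
have : mr D' <= sup E by apply: sup_upper_bound => //; exists D'.
lra.
Qed.

Definition stepf (B : set T) : set T := projT1 (cid (step_ex B)).

Lemma stepfP B : measurable B -> mr B <= a -> adm B (stepf B) /\
  (forall D', adm B D' -> mr D' <= 2 * mr (stepf B)).
Proof. exact: (projT2 (cid (step_ex B))). Qed.

Hypothesis a0 : 0 <= a.
Hypothesis aS : a <= mr S.

Definition seqB k := iter k (fun B => B `|` stepf B) set0.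

Lemma seqB_inv k : [/\ measurable (seqB k), seqB k `<=` S & mr (seqB k) <= a].
Proof.
elim: k => [|k [mB BS Ba]]; first by rewrite /seqB /= mr0; split => //; exact: sub0set.
have [[mD DS Da] _] := stepfP mB Ba.
have BD0 : seqB k `&` stepf (seqB k) = set0.
  by apply/seteqP; split => // w [Bw /DS []].
split => /=.
- exact: measurableU.
- by move=> w [/BS//|/DS []].
- by rewrite mr_U.
Qed.

Lemma seqB_mr k : mr (seqB k.+1) = mr (seqB k) + mr (stepf (seqB k)).
Proof.
have [mB BS Ba] := seqB_inv k.
have [[mD DS Da] _] := stepfP mB Ba.
have BD0 : seqB k `&` stepf (seqB k) = set0.
  by apply/seteqP; split => // w [Bw /DS []].
by rewrite /= mr_U.
Qed.

Lemma seqB_incr i j : (i <= j)%N -> seqB i `<=` seqB j.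
Proof.
elim: j => [|j IH]; first by rewrite leqn0 => /eqP ->.
rewrite leq_eqVlt => /orP[/eqP -> //|]; rewrite ltnS => /IH ij.
by move=> w /ij Bw; left.
Qed.

Lemma ivt_ex : exists B, [/\ measurable B, B `<=` S & mr B = a].
Proof.
pose Binf := \bigcup_k seqB k.
have mBk k : measurable (seqB k) by case: (seqB_inv k).
have mBinf : measurable Binf by exact: bigcup_measurable.
have BinfS : Binf `<=` S by move=> w [k _]; case: (seqB_inv k) => _ + _; apply.
have incr : nondecreasing_seq seqB by move=> i j ij; rewrite subsetEset; exact: seqB_incr.
have cv := @nondecreasing_cvg_mu _ _ _ m _ mBk mBinf incr.
have Binfa : mr Binf <= a.
  rewrite -lee_fin -mrE// -(cvg_lim _ cv)//.
  apply: lime_le; first exact: (cvgP _ cv).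
  by apply: nearW => k /=; rewrite mrE// lee_fin; case: (seqB_inv k).
have BkB k : seqB k `<=` Binf by move=> w Bw; exists k.
have Bk_le k : mr (seqB k) <= mr Binf by apply: mr_le.
clearbody Binf.
exists Binf; split => //; apply/eqP; rewrite eq_le Binfa /= leNgt; apply/negP => Blt.
have hpos : 0 < mr (S `\` Binf).
  rewrite mr_setD//; have := lt_le_trans Blt aS; lra.
have r0 : 0 < a - mr Binf by lra.
have [D0 [mD0 D0S D00 D0r]] := small_eps (measurableD mS mBinf) hpos r0.
have admk k : adm (seqB k) D0.
  split => //.
    by move=> w /D0S [Sw nBw]; split => // /BkB.
  have := Bk_le k; lra.
have grow k : mr (seqB k) >= k%:R * mr D0 / 2.
  elim: k => [|k IH]; first by rewrite mul0r mul0r mr_ge0.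
  have [mB _ Ba] := seqB_inv k.
  have [_ h] := stepfP mB Ba.
  have := h _ (admk k).
  have -> : k.+1%:R = k%:R + 1 :> R by rewrite natr1.
  rewrite seqB_mr mulrDl mul1r; move: IH; lra.
pose k := truncn (2 * a / mr D0).
have hk : 2 * a / mr D0 < k.+1%:R by exact: truncnS_gt.
have := grow k.+1; have [_ _ Ba] := seqB_inv k.+1.
have : 2 * a < k.+1%:R * mr D0 by rewrite -ltr_pdivrMr.
lra.
Qed.
End ivt.


Lemma split_nat (C : set T) : measurable C -> forall k (c : nat -> R),
  (forall i, 0 <= c i) -> forall S, measurable S ->
  mr (C `&` S) <= \sum_(i < k.+1) c i ->
  exists A : nat -> set T,
    [/\ (forall i, measurable (A i)), (forall i, A i `<=` S),
     (forall i j, (i <= k)%N -> (j <= k)%N -> i != j -> A i `&` A j = set0),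
     (forall w, S w -> exists2 i, (i <= k)%N & A i w) &
     (forall i, (i <= k)%N -> mr (C `&` A i) <= c i)].
Proof.
move=> mC; elim=> [|k IH] c c0 S mS hS.
  exists (fun=> S); split.
  - by [].
  - by move=> i w.
  - by move=> i j; rewrite !leqn0 => /eqP-> /eqP->; rewrite eqxx.
  - by move=> w Sw; exists 0%N.
  - by move=> i; rewrite leqn0 => /eqP->; rewrite big_ord1 in hS.
rewrite big_ord_recl /= in hS.
have mCS : measurable (C `&` S) by exact: measurableI.
pose a := Num.min (c 0%N) (mr (C `&` S)).
have a0 : 0 <= a by rewrite /a le_min c0 mr_ge0.
have aS : a <= mr (C `&` S) by rewrite /a ge_min lexx orbT.
have [B [mB BCS Ba]] := ivt_ex mCS a0 aS.
have mS' : measurable (S `\` B) by exact: measurableD.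
have hS' : mr (C `&` (S `\` B)) <= \sum_(i < k.+1) c (bump 0 i).
  have -> : C `&` (S `\` B) = (C `&` S) `\` B.
    by rewrite setIDA.
  rewrite mr_setD// Ba.
  have hsum : 0 <= \sum_(i < k.+1) c (bump 0 i) by apply: sumr_ge0.
  have : a = c 0%N \/ a = mr (C `&` S).
    have [h|h] := leP (c 0%N) (mr (C `&` S)); [left; exact: min_l h | right; apply: min_r; exact: ltW].
  case=> ->; lra.
have [A' [mA' A'S dA' cA' bA']] := IH (fun i => c (bump 0 i)) (fun i => c0 _) _ mS' hS'.
exists (fun i => if i is i'.+1 then A' i' else B); split.
- by move=> [|i].
- move=> [|i] w /=; first by move/BCS => [].
  by move/A'S => [].
- move=> [|i] [|j] //= ik jk ij.
  + by apply/seteqP; split => // w [Bw /A'S [] _].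
  + by apply/seteqP; split => // w [/A'S [] _ ?].
  + by apply: dA'.
- move=> w Sw; have [Bw|nBw] := pselect (B w); first by exists 0%N.
  by have [i ik A'w] := cA' w (conj Sw nBw); exists i.+1.
- move=> [|i] ik /=.
  + have -> : C `&` B = B by apply/seteqP; split => [w []//|w /[dup] /BCS [] ? _ ?]; split.
    by rewrite Ba /a ge_min lexx.
  + exact: bA'.
Qed.

Lemma split_ord n (C : set T) : measurable C -> forall (c : 'I_n.+1 -> R),
  (forall i, 0 <= c i) -> mr C <= \sum_(i < n.+1) c i ->
  exists A : 'I_n.+1 -> set T, partition_n A /\ forall i, mr (C `&` A i) <= c i.
Proof.
move=> mC c c0 hC.
pose cn (k : nat) := c (inord k).
have hC' : mr (C `&` setT) <= \sum_(i < n.+1) cn i.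
  by rewrite setIT /cn; under eq_bigr do rewrite inord_val.
have [A [mA _ dA cA bA]] := @split_nat C mC n cn (fun i => c0 _) setT measurableT hC'.
exists (fun i => A (val i)); split; first split.
- by move=> i.
- move=> i j ij; apply: dA; [exact: (ltn_ord i) | exact: (ltn_ord j) |].
  by apply: contraNN ij => /eqP /val_inj ->.
- apply/seteqP; split => // w _.
  have [i ik Aw] := cA w I.
  by exists (inord i) => //; rewrite /= inordK.
- by move=> i; have := bA _ (ltn_ord i); rewrite /cn inord_val.
Qed.

End finm.

Section densm.
Context d (T : measurableType d) (R : realType) (mu : {measure set T -> \bar R}).
Variable f : T -> R.
Definition densm of measurable_fun setT f & (forall w, 0 <= f w) :=
  fun (A : set T) => (\int[mu]_(w in A) (f w)%:E)%E.
Variable mf : measurable_fun setT f.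
Variable f0 : forall w, 0 <= f w.
Let Q := densm mf f0.
Let densm0 : Q set0 = 0%E.
Proof. by rewrite /Q /densm integral_set0. Qed.
Let densm_ge0 A : (0 <= Q A)%E.
Proof. by apply: integral_ge0 => w _; rewrite lee_fin. Qed.
Let densm_sa : semi_sigma_additive Q.
Proof.
apply: semi_sigma_additive_nng_induced => //.
exact/measurable_EFinP.
Qed.
HB.instance Definition _ := isMeasure.Build _ _ _ Q densm0 densm_ge0 densm_sa.
Lemma densmE A : densm mf f0 A = (\int[mu]_(w in A) (f w)%:E)%E.
Proof. by []. Qed.
End densm.

Section densprob.
Context d (T : measurableType d) (R : realType) (mu : {measure set T -> \bar R}).
Variable f : T -> R.
Definition densp of measurable_fun setT f & (forall w, 0 <= f w) &
  (\int[mu]_w (f w)%:E = 1)%E := fun (A : set T) => (\int[mu]_(w in A) (f w)%:E)%E.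
Variable mf : measurable_fun setT f.
Variable f0 : forall w, 0 <= f w.
Variable f1 : (\int[mu]_w (f w)%:E = 1)%E.
Let Q := densp mf f0 f1.
Let densp0 : Q set0 = 0%E.
Proof. by rewrite /Q /densp integral_set0. Qed.
Let densp_ge0 A : (0 <= Q A)%E.
Proof. by apply: integral_ge0 => w _; rewrite lee_fin. Qed.
Let densp_sa : semi_sigma_additive Q.
Proof.
apply: semi_sigma_additive_nng_induced => //.
exact/measurable_EFinP.
Qed.
HB.instance Definition _ := isMeasure.Build _ _ _ Q densp0 densp_ge0 densp_sa.
Let densp_setT : Q setT = 1%E. Proof. exact: f1. Qed.
HB.instance Definition _ := @Measure_isProbability.Build _ _ R Q densp_setT.
End densprob.

Section nu.
Context d (T : measurableType d) (R : realType) (P : probability T R) (Y : T -> R).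
Hypothesis mY : measurable_fun setT Y.
Hypothesis Y0 : forall w, 0 <= Y w.
Hypothesis EYfin : (\int[P]_w (Y w)%:E < +oo)%E.
Local Notation nu := (densm P mY Y0).

Lemma nuE A : (nu : {measure set T -> \bar R}) A = (\int[P]_(w in A) (Y w)%:E)%E.
Proof. by []. Qed.

Lemma nu_fin : (nu setT < +oo)%E.
Proof. exact: EYfin. Qed.

Lemma P_fin : (P setT < +oo)%E.
Proof. by rewrite probability_setT ltry. Qed.

Lemma nu_pos A : measurable A -> (forall w, A w -> 0 < Y w) -> 0 < mr P A ->
  0 < mr nu A.
Proof.
move=> mA Ypos PA; rewrite lt_neqAle mr_ge0 andbT; apply/negP => /eqP nuA0.
have mYA : measurable_fun A (fun w => (Y w)%:E).
  by apply: measurable_funTS; exact/measurable_EFinP.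
have H1 : (\int[P]_(w in A) `|(Y w)%:E| = 0)%E.
  have -> : (\int[P]_(w in A) `|(Y w)%:E| = nu A)%E.
    by apply: eq_integral => w _; rewrite gee0_abs// lee_fin.
  by rewrite (mrE nu_fin mA) -nuA0.
have [N [mN PN0 sub]] := (ae_eq_integral_abs P mA mYA).1 H1.
have AN : A `<=` N.
  move=> w Aw; apply: sub => /= /(_ Aw) /eqP; rewrite eqe.
  by rewrite gt_eqF// Ypos.
have := mr_le P_fin mA mN AN.
have : mr P N = 0 by rewrite /mr PN0.
lra.
Qed.

Lemma nu_atom : atomless P -> forall A, measurable A -> 0 < mr nu A ->
  exists B, [/\ measurable B, B `<=` A & 0 < mr nu B < mr nu A].
Proof.
move=> atP A mA nuA.
pose A' := A `&` [set w | 0 < Y w].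
have mA' : measurable A' by apply: measurableI => //; exact: mlt.
have nuAA' : mr nu A = mr nu A'.
  rewrite (mr_DI nu_fin mA (@mlt _ _ _ Y 0 mY)) -/A'.
  suff -> : mr nu (A `\` [set w | 0 < Y w]) = 0 by rewrite add0r.
  have h : (\int[P]_(w in A `\` [set w | (0 < Y w)%R]) (Y w)%:E = 0)%E.
    apply: integral0_eq => w [_ /negP]; rewrite -leNgt => Yw.
    by apply/eqP; rewrite eqe eq_le Yw Y0.
  by rewrite /mr nuE h.
have A'A : A' `<=` A by apply: subIsetl.
have A'Y : forall w, A' w -> 0 < Y w by move=> w [].
clearbody A'.
have PA' : 0 < mr P A'.
  rewrite lt_neqAle mr_ge0 andbT; apply/negP => /eqP PA0.
  suff h : mr nu A' = 0 by move: nuA; rewrite nuAA' h ltxx.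
  rewrite /mr nuE null_set_integral//.
    by apply: measurable_funTS; exact/measurable_EFinP.
  by rewrite (mrE P_fin mA') -PA0.
have [B [mB BA' PB]] : exists B, [/\ measurable B, B `<=` A' & 0 < mr P B < mr P A'].
  have : (0 < P A')%E by rewrite mrE ?lte_fin//; exact: P_fin.
  move=> /(atP _ mA') [B [mB BA' /andP[PB0 PBA]]].
  exists B; split => //; move: PB0 PBA.
  by rewrite (mrE P_fin mB) (mrE P_fin mA') !lte_fin => -> ->.
move: PB => /andP[PB0 PBA].
have nuB : 0 < mr nu B by apply: nu_pos => // w /BA' /A'Y.
have nuD : 0 < mr nu (A' `\` B).
  apply: nu_pos; first exact: measurableD.
    by move=> w [/A'Y].
  by rewrite mr_setD//; [lra|exact: P_fin].
have := mr_setD nu_fin mA' mB BA'.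
exists B; split => //; first exact: subset_trans BA' A'A.
rewrite nuB /=; lra.
Qed.

End nu.

Section rho.
Context d (T : measurableType d) (R : realType) (P : probability T R) (Y : T -> R).
Hypothesis mY : measurable_fun setT Y.
Hypothesis Y0 : forall w, 0 <= Y w.
Hypothesis EYfin : (\int[P]_w (Y w)%:E < +oo)%E.
Hypothesis EY1 : (1 < \int[P]_w (Y w)%:E)%E.
Local Notation nu := (densm P mY Y0 : {measure set T -> \bar R}).
Local Notation nufin := (@nu_fin _ _ _ P Y mY Y0 EYfin).

Lemma mYE : measurable_fun setT (fun w => (Y w)%:E).
Proof. exact/measurable_EFinP. Qed.

Lemma Q_le (Q : probability T R) : PY P Y Q -> forall A, measurable A ->
  (Q A <= nu A)%E.
Proof.
move=> [f [mf fb QA]] A mA; rewrite QA// nuE.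
apply: ge0_le_integral => //.
- by move=> w _; rewrite lee_fin; case/andP: (fb w).
- by apply: measurable_funTS; exact/measurable_EFinP.
- by apply: measurable_funTS; exact: mYE.
- by move=> w _; rewrite lee_fin; case/andP: (fb w).
Qed.

Lemma V_gt1 : 1 < mr nu setT.
Proof. by rewrite -lte_fin -(mrE nufin)// nuE. Qed.

Lemma Q_mk B (mB : measurable B) (al be : R) :
  0 <= al <= 1 -> 0 <= be <= 1 ->
  al * mr nu B + be * (mr nu setT - mr nu B) = 1 ->
  exists Q : probability T R, PY P Y Q /\ Q B = (al * mr nu B)%:E.
Proof.
move=> /andP[al0 al1] /andP[be0 be1] h1.
pose f w := Y w * (al * \1_B w + be * \1_(~` B) w).
have mf : measurable_fun setT f.
  apply: measurable_funM => //; apply: measurable_funD.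
    by apply: measurable_funM => //; exact: measurable_indic.
  apply: measurable_funM => //; apply: measurable_indic.
  exact: measurableC.
have fB w : B w -> f w = al * Y w.
  move=> Bw; rewrite /f !indicE (mem_set Bw) (@memNset _ (~` B) w (fun h => h Bw)).
  by rewrite mulr1 mulr0 addr0 mulrC.
have fC w : ~ B w -> f w = be * Y w.
  move=> Bw; rewrite /f !indicE (@mem_set _ (~` B) w Bw) (memNset Bw).
  by rewrite mulr1 mulr0 add0r mulrC.
have fb w : 0 <= f w <= Y w.
  have [Bw|Bw] := pselect (B w); [rewrite fB|rewrite fC] => //;
    by rewrite mulr_ge0//= ler_piMl.
have f0 w : 0 <= f w by case/andP: (fb w).
have mfE : measurable_fun setT (fun w => (f w)%:E) by exact/measurable_EFinP.
have intB : (\int[P]_(w in B) (f w)%:E = (al * mr nu B)%:E)%E.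
  rewrite (eq_integral (fun w => al%:E * (Y w)%:E)%E); last first.
    by move=> w /set_mem Bw; rewrite fB.
  have Yp : forall D, forall w, D w -> (0 <= (Y w)%:E)%E by move=> D w _; rewrite lee_fin.
  rewrite (@ge0_integralZl_EFin _ _ _ P B mB (fun w => (Y w)%:E) (Yp _)
    (measurable_funTS mYE) al al0).
  by rewrite -nuE (mrE nufin mB).
have intC : (\int[P]_(w in ~` B) (f w)%:E =
    (be * (mr nu setT - mr nu B))%:E)%E.
  rewrite (eq_integral (fun w => be%:E * (Y w)%:E)%E); last first.
    by move=> w /set_mem Bw; rewrite fC.
  have Yp : forall D, forall w, D w -> (0 <= (Y w)%:E)%E by move=> D w _; rewrite lee_fin.
  rewrite (@ge0_integralZl_EFin _ _ _ P (~` B) (measurableC mB) (fun w => (Y w)%:E) (Yp _)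
    (measurable_funTS mYE) be be0).
  by rewrite -nuE (mrE nufin (measurableC mB)) -setTD mr_setD.
have f1 : (\int[P]_w (f w)%:E = 1)%E.
  rewrite -(setUv B) (@ge0_integral_setU _ _ _ P B (~` B) mB (measurableC mB)).
  - by rewrite intB intC -EFinD h1.
  - by rewrite setUv.
  - by move=> w _; rewrite lee_fin.
  - by rewrite /disj_set setICr.
exists (densp mf f0 f1); split; last exact: intB.
by exists f; split.
Qed.


Lemma Q_big B (mB : measurable B) (c : R) : c < 1 -> (c%:E < nu B)%E ->
  exists Q : probability T R, PY P Y Q /\ (c%:E < Q B)%E.
Proof.
move=> c1; rewrite (mrE nufin mB) lte_fin => cb.
have V1 := V_gt1.
have bV : mr nu B <= mr nu setT by apply: mr_le.
have b0 : 0 <= mr nu B := mr_ge0 _ _.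
have [b1|b1] := leP 1 (mr nu B).
  have bp : 0 < mr nu B := lt_le_trans ltr01 b1.
  have h1 : 0 <= (mr nu B)^-1 <= 1 by rewrite invr_ge0 b0 /= invf_le1.
  have h2 : (0:R) <= (0:R) <= (1:R) by rewrite lexx ler01.
  have h3 : (mr nu B)^-1 * mr nu B + 0 * (mr nu setT - mr nu B) = 1.
    by rewrite mul0r addr0 mulVf// gt_eqF.
  have [Q [PQ QB]] := Q_mk mB h1 h2 h3.
  exists Q; split => //; rewrite QB mulVf ?gt_eqF//.
have Vb : 0 < mr nu setT - mr nu B by rewrite subr_gt0 (lt_trans b1 V1).
have h1 : (0:R) <= (1:R) <= (1:R) by rewrite ler01 lexx.
have h2 : 0 <= (1 - mr nu B) / (mr nu setT - mr nu B) <= 1.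
  rewrite divr_ge0 /= ?subr_ge0 ?(ltW b1) ?(ltW Vb)//.
  by rewrite ler_pdivrMr// mul1r lerD2r ltW.
have h3 : 1 * mr nu B + (1 - mr nu B) / (mr nu setT - mr nu B) *
   (mr nu setT - mr nu B) = 1.
  by rewrite mul1r -mulrA mulVf ?gt_eqF// mulr1 addrC subrK.
have [Q [PQ QB]] := Q_mk mB h1 h2 h3.
by exists Q; split => //; rewrite QB mul1r lte_fin.
Qed.

Lemma rho_ge (L : R -> R) X (Q : probability T R) : PY P Y Q ->
  (LVaR L Q X <= rhoY L P Y X)%E.
Proof. by move=> PQ; apply: ereal_sup_ubound; exists Q. Qed.

Lemma R2 (L : R -> R) : HI L -> forall X, measurable_fun setT X -> forall t : R,
  (rhoY L P Y X < t%:E)%E -> (nu [set w | (t < X w)%R] <= (L t)%:E)%E.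
Proof.
move=> [Lh Lb] X mX t rt; rewrite leNgt; apply/negP => Lnu.
have Lt1 : L t < 1 by case/andP: (Lb t).
have [Q [PQ QB]] := Q_big (mlt t mX) Lt1 Lnu.
have := le_lt_trans (rho_ge L X PQ) rt.
move/ereal_inf_lt => [_ [x hx <-]]; rewrite lte_fin => xt.
have h1 : (Q [set w | (t < X w)%R] <= Q [set w | (x < X w)%R])%E.
  rewrite le_measure ?inE//; try exact: mlt.
  by move=> w /= /(lt_trans xt).
have h2 : ((L x)%:E <= (L t)%:E)%E by rewrite lee_fin Lh// ltW.
by have := lt_le_trans QB (le_trans h1 (le_trans hx h2)); rewrite ltxx.
Qed.

Lemma R3 (L : R -> R) X (A : set T) (x y : R) : measurable_fun setT X ->
  measurable A -> (nu ([set w | (x < X w)%R] `&` A) <= (L y)%:E)%E ->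
  (rhoY L P Y (fun w => ((X w - x) * \1_A w + y)%R) <= y%:E)%E.
Proof.
move=> mX mA h; apply/ereal_supP => _ [Q PQ <-].
apply: ereal_inf_lbound; exists y => //=.
have -> : [set w | (y < (X w - x) * \1_A w + y)%R] = [set w | (x < X w)%R] `&` A.
  apply/seteqP; split => w /=.
    rewrite ltrDr indicE; have [wA|wA] := boolP (w \in A).
      by rewrite mulr1 subr_gt0 => ?; split => //; exact: set_mem.
    by rewrite mulr0 ltxx.
  move=> [xw Aw]; rewrite ltrDr indicE mem_set// mulr1 subr_gt0//.
apply: le_trans h; apply: Q_le => //.
by apply: measurableI => //; exact: mlt.
Qed.

Lemma rho_gtNy (L : R -> R) : HI L -> forall X, measurable_fun setT X ->
  (-oo < rhoY L P Y X)%E.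
Proof.
move=> HL X mX; rewrite ltNge; apply/negP => h.
have hb t : (nu [set w | (t < X w)%R] <= (L t)%:E)%E.
  by apply: R2 => //; apply: le_lt_trans h _; rewrite ltNye.
pose F k := [set w | (- (k%:R) < X w)%R].
have mF k : measurable (F k) by exact: mlt.
have FU : \bigcup_k F k = setT.
  apply/seteqP; split => // w _; exists (truncn (- X w)).+1 => //.
  by rewrite /F /= ltrNl; exact: truncnS_gt.
have mU : measurable (\bigcup_k F k) by rewrite FU.
have incr : nondecreasing_seq F.
  move=> i j ij; rewrite subsetEset => w; rewrite /F /=; apply: le_lt_trans.
  by rewrite lerN2 ler_nat.
have cv := @nondecreasing_cvg_mu _ _ _ nu _ mF mU incr.
have : (nu (\bigcup_k F k) <= (L 0)%:E)%E.
  rewrite -(cvg_lim _ cv)//; apply: lime_le; first exact: (cvgP _ cv).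
  apply: nearW => k /=; apply: le_trans (hb _) _.
  by rewrite lee_fin; case: HL => Lh _; apply: Lh; rewrite oppr_le0.
rewrite FU (mrE nufin)// lee_fin => h0.
have := V_gt1; case: HL => _ /(_ 0) /andP[_ L1].
move: h0; set v := mr _ _; lra.
Qed.

Lemma Lbar_ub n (L : 'I_n -> R -> R) : (forall i, HI (L i)) ->
  forall y : 'I_n -> R, \sum_(i < n) L i (y i) <= Lbar L (\sum_(i < n) y i).
Proof.
move=> HL y; apply: sup_upper_bound; last by exists y.
split; first by exists (\sum_(i < n) L i (y i)), y.
exists n%:R => _ [y' [_ ->]].
rewrite -[n in n%:R]card_ord -sumr_const; apply: ler_sum => i _.
by case: (HL i) => _ /(_ (y' i)) /andP[_ /ltW].
Qed.

Lemma LB n (L : 'I_n.+1 -> R -> R) (X : T -> R) (Xi : 'I_n.+1 -> T -> R) :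
  (forall i, HI (L i)) -> (forall i, measurable_fun setT (Xi i)) ->
  (forall w, \sum_(i < n.+1) Xi i w = X w) -> measurable_fun setT X ->
  (rhsVaR P Y X (Lbar L) <= \sum_(i < n.+1) rhoY (L i) P Y (Xi i))%E.
Proof.
move=> HL mXi XE mX.
have gt i : (-oo < rhoY (L i) P Y (Xi i))%E by apply: rho_gtNy.
have [[j zj]|nz] := pselect (exists i, rhoY (L i) P Y (Xi i) = +oo%E).
  suff -> : (\sum_(i < n.+1) rhoY (L i) P Y (Xi i) = +oo)%E by rewrite leey.
  apply/esum_eqyP; last by exists j; split => //; rewrite mem_index_enum.
  by move=> i _; rewrite gt_eqF.
have fz i : rhoY (L i) P Y (Xi i) \is a fin_num.
  rewrite fin_numE gt_eqF//= lt_eqF//; rewrite ltey; apply/negP => /eqP h.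
  by apply: nz; exists i.
pose z i := fine (rhoY (L i) P Y (Xi i)).
have zE : (\sum_(i < n.+1) rhoY (L i) P Y (Xi i) = (\sum_(i < n.+1) z i)%:E)%E.
  by rewrite -sumEFin; apply: eq_bigr => i _; rewrite /z fineK.
rewrite zE; apply/lee_addgt0Pr => e e0.
have nR : (0 : R) < n.+1%:R by rewrite ltr0n.
pose t i := z i + e / n.+1%:R.
have tz i : (rhoY (L i) P Y (Xi i) < (t i)%:E)%E.
  by rewrite -(fineK (fz i)) lte_fin /t -/(z i) ltrDl divr_gt0.
have St : \sum_(i < n.+1) t i = \sum_(i < n.+1) z i + e.
  rewrite big_split /= sumr_const card_ord; congr (_ + _).
  rewrite -mulr_natr; field.
  by rewrite gt_eqF.
rewrite -EFinD -St; apply: ereal_inf_lbound; exists (\sum_(i < n.+1) t i) => //=.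
pose F k := [set w | (t (inord k) < Xi (inord k) w)%R].
have mF k : measurable (F k) by exact: mlt.
have cover : [set w | (\sum_(i < n.+1) t i < X w)%R] `<=` \big[setU/set0]_(k < n.+1) F k.
  move=> w /= tw; rewrite -bigcup_mkord.
  apply: contrapT => hn; move: tw; rewrite -XE ltNge; apply/negP/negPn.
  apply: ler_sum => i _; rewrite leNgt; apply/negP => hi; apply: hn.
  by exists (nat_of_ord i); [exact: ltn_ord | rewrite /F /= inord_val].
rewrite -nuE.
have sub := @content_subadditive _ _ _ nu _ F n.+1 (fun k _ => mF k) (mlt _ mX) cover.
apply: le_trans sub _.
apply: (@le_trans _ _ (\sum_(i < n.+1) (L i (t i))%:E)%E).
  apply: lee_sum => i _; rewrite /F inord_val.
  by apply: R2 => //; exact: tz.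
by rewrite sumEFin lee_fin; apply: Lbar_ub.
Qed.
End rho.

Section mainsec.
Context d (T : measurableType d) (R : realType) (P : probability T R) (Y : T -> R).
Hypothesis mY : measurable_fun setT Y.
Hypothesis Y0 : forall w, 0 <= Y w.
Hypothesis EYfin : (\int[P]_w (Y w)%:E < +oo)%E.
Hypothesis EY1 : (1 < \int[P]_w (Y w)%:E)%E.
Hypothesis atP : atomless P.
Variables (n : nat) (L : 'I_n.+1 -> R -> R).
Hypothesis HL : forall i, HI (L i).
Hypothesis att : attainable L.
Variable Xs : set (T -> R).
Hypothesis adm : admissible_class Xs.
Variable X : T -> R.
Hypothesis XsX : Xs X.
Local Notation nu := (densm P mY Y0 : {measure set T -> \bar R}).
Local Notation nufin := (@nu_fin _ _ _ P Y mY Y0 EYfin).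

Lemma mX : measurable_fun setT X.
Proof. by case: adm => + _ _ _ _; apply. Qed.

Lemma PS (A : 'I_n.+1 -> set T) : partition_n A ->
  forall w, \sum_(i < n.+1) \1_(A i) w = 1 :> R.
Proof.
move=> [mA dA cA] w.
have : (\bigcup_(i in [set: 'I_n.+1]) A i) w by rewrite cA.
move=> [j _ Ajw]; rewrite (bigD1 j)//= indicE mem_set// big1 ?addr0// => i ij.
rewrite indicE memNset// => Aiw.
have : (A i `&` A j) w by [].
by rewrite dA.
Qed.

Lemma UB x : (\int[P]_(w in [set w | (x < X w)%R]) (Y w)%:E <= (Lbar L x)%:E)%E ->
  exists ys A, [/\ \sum_(i < n.+1) ys i = x,
    \sum_(i < n.+1) L i (ys i) = Lbar L x, partition_n A &
    forall i, (\int[P]_(w in [set w | (x < X w)%R] `&` A i) (Y w)%:E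
                <= (L i (ys i))%:E)%E].
Proof.
move=> hx; have [y [ys hy]] := att x.
have mC : measurable [set w | (x < X w)%R] by exact: mlt mX.
have c0 i : 0 <= L i (y i) by case: (HL i) => _ /(_ (y i)) /andP[/ltW].
have hC : mr nu [set w | (x < X w)%R] <= \sum_(i < n.+1) L i (y i).
  by rewrite hy -lee_fin -(mrE nufin mC) nuE.
have atom := @nu_atom _ _ _ P Y mY Y0 EYfin atP.
have [A [pA hA]] := split_ord nufin atom mC c0 hC.
exists y, A; split => // i.
have mA : measurable (A i) by case: pA => + _ _; apply.
rewrite -nuE (mrE nufin (measurableI _ _ mC mA)) lee_fin.
exact: hA.
Qed.

Lemma ALLOC x (ys : 'I_n.+1 -> R) (A : 'I_n.+1 -> set T) :
  \sum_(i < n.+1) ys i = x -> partition_n A ->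
  (forall i, (\int[P]_(w in [set w | (x < X w)%R] `&` A i) (Y w)%:E
                <= (L i (ys i))%:E)%E) ->
  allocation Xs X (fun i w => (X w - x) * \1_(A i) w + ys i) /\
  (\sum_(i < n.+1) rhoY (L i) P Y (fun w => ((X w - x) * \1_(A i) w + ys i)%R)
     <= x%:E)%E.
Proof.
move=> hs pA hb.
have mA i : measurable (A i) by case: pA => + _ _; apply.
case: adm => XsM Xscst XsD XsB XsI.
split; first split.
- move=> i; apply: XsD (Xscst (ys i)); apply: XsI (mA i).
  exact: XsB XsX (Xscst x).
- move=> w; rewrite big_split /= -mulr_sumr PS// mulr1 hs.
  by rewrite subrK.
- have -> : x%:E = (\sum_(i < n.+1) (ys i)%:E)%E by rewrite sumEFin hs.
  apply: lee_sum => i _.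
  apply: R3 => //; first exact: mX.
  by rewrite nuE; exact: hb.
Qed.

Lemma LbarM x x' : x <= x' -> Lbar L x <= Lbar L x'.
Proof.
move=> xx'; have [y [ys hy]] := att x.
pose y' i := y i + (if i == ord0 then x' - x else 0).
have hy' : \sum_(i < n.+1) y' i = x'.
  rewrite big_split /= ys (bigD1 ord0)//= ?eqxx big1 ?addr0.
    by rewrite addrC subrK.
  by move=> i /negbTE ->.
rewrite -hy -hy'; apply: le_trans (Lbar_ub HL y').
apply: ler_sum => i _; case: (HL i) => Lh _; apply: Lh.
by rewrite /y' lerDl; case: ifP => _; rewrite ?subr_ge0.
Qed.

Lemma part1 : infconv Xs (fun i => rhoY (L i) P Y) X = rhsVaR P Y X (Lbar L).
Proof.
apply/le_anti/andP; split.
  apply/ereal_infP => _ [x hx <-].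
  have [ys [A [hs _ pA hb]]] := UB hx.
  have [al hle] := ALLOC hs pA hb.
  apply: le_trans hle; apply: ereal_inf_lbound.
  by exists (fun i w => (X w - x) * \1_(A i) w + ys i).
apply/ereal_infP => _ [Xi [XiXs XiE] <-].
apply: LB => //.
- by move=> i; case: adm => + _ _ _ _; apply.
- exact: mX.
Qed.


Lemma rc xs : rhsVaR P Y X (Lbar L) = xs%:E ->
  Lbar L x @[x --> xs^'+] --> Lbar L xs ->
  (\int[P]_(w in [set w | (xs < X w)%R]) (Y w)%:E <= (Lbar L xs)%:E)%E.
Proof.
move=> hxs hrc.
have inS s : xs < s -> (nu [set w | (s < X w)%R] <= (Lbar L s)%:E)%E.
  move=> xss; have : (rhsVaR P Y X (Lbar L) < s%:E)%E by rewrite hxs lte_fin.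
  move/ereal_inf_lt => [_ [s0 hs0 <-]]; rewrite lte_fin => s0s.
  apply: (@le_trans _ _ (nu [set w | (s0 < X w)%R])).
    apply: le_measure; rewrite ?inE; [exact: (mlt _ mX) | exact: (mlt _ mX) |].
    by move=> w /= sw; exact: lt_trans s0s sw.
  by apply: le_trans hs0 _; rewrite lee_fin LbarM// ltW.
apply/lee_addgt0Pr => e e0.
have [dl dl0 hd] : exists2 dl, 0 < dl & forall x, xs < x < xs + dl ->
    `|Lbar L xs - Lbar L x| < e.
  move: hrc => /cvgrPdist_lt /(_ e e0).
  rewrite near_withinE /= => /nbhs_ballP [dl /= dl0 hd].
  exists dl => // x /andP[ax xd]; apply: hd => //.
  rewrite /ball /= ltr_distlC; apply/andP; split; lra.
pose F k := [set w | (xs + (k.+1%:R)^-1 < X w)%R].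
have mF k : measurable (F k) by exact: (mlt _ mX).
have FU : \bigcup_k F k = [set w | (xs < X w)%R].
  apply/seteqP; split => w /=.
    by move=> [k _]; apply: le_lt_trans; rewrite lerDl invr_ge0.
  move=> xw; exists (truncn ((X w - xs)^-1)) => //; rewrite /F /=.
  rewrite -ltrBrDl -[X in _ < X]invrK ltf_pV2 ?posrE ?invr_gt0 ?subr_gt0//.
  exact: truncnS_gt.
have mU : measurable (\bigcup_k F k) by rewrite FU; exact: (mlt _ mX).
have incr : nondecreasing_seq F.
  move=> i j ij; rewrite subsetEset => w; rewrite /F /=; apply: le_lt_trans.
  by rewrite lerD2l lef_pV2 ?posrE// ler_nat.
have cv := @nondecreasing_cvg_mu _ _ _ nu _ mF mU incr.
rewrite -nuE -FU -(cvg_lim _ cv)//; apply: lime_le; first exact: (cvgP _ cv).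
exists (truncn (dl^-1)) => // k /= Kk.
have sk : xs < xs + (k.+1%:R)^-1 < xs + dl.
  rewrite ltrDl invr_gt0 ltr0n /= ltrD2l -[X in _ < X]invrK ltf_pV2 ?posrE ?invr_gt0//.
  rewrite -truncn_le_nat; exact: Kk.
have := hd _ sk; rewrite ltr_distlC => /andP[_ h].
apply: le_trans (inS _ _) _; first by case/andP: sk.
by rewrite -EFinD lee_fin; exact: ltW.
Qed.
End mainsec.

Unset Implicit Arguments.

Theorem mainTheorem16 (d : measure_display) (T : measurableType d)
  (R : realType) (P : probability T R) (n : nat) (L : 'I_n -> R -> R)
  (Y : T -> R) (Xs : set (T -> R)) :
  (0 < n)%N ->
  (forall i, HI (L i)) ->
  atomless P ->
  measurable_fun setT Y -> (forall w, 0 <= Y w) ->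
  (1 < \int[P]_w (Y w)%:E < +oo)%E ->
  admissible_class Xs ->
  attainable L ->
  forall X : T -> R, Xs X ->
    infconv Xs (fun i => rhoY (L i) P Y) X = rhsVaR P Y X (Lbar L) /\
    forall xs : R, rhsVaR P Y X (Lbar L) = xs%:E ->
      Lbar L x @[x --> xs^'+] --> Lbar L xs ->
      let conds (ys : 'I_n -> R) (A : 'I_n -> set T) :=
        [/\ \sum_(i < n) ys i = xs,
            \sum_(i < n) L i (ys i) = Lbar L xs,
            partition_n A &
            forall i, (\int[P]_(w in [set w | (xs < X w)%R] `&` A i) (Y w)%:E
                         <= (L i (ys i))%:E)%E] in
      (exists ys A, conds ys A) /\
      forall ys A, conds ys A ->
        optimal_allocation Xs (fun i => rhoY (L i) P Y) X
          (fun i w => (X w - xs) * \1_(A i) w + ys i).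
Proof.
move=> n0 HL atP mY Y0 /andP[EY1 EYfin] adm att X XsX.
move: L HL att; case: n n0 => // n _ L HL att.
have p1 := part1 mY Y0 EYfin EY1 atP HL att adm XsX.
split; first exact: p1.
move=> xs hxs hrc conds; split.
  have E := rc mY Y0 HL att adm XsX hxs hrc.
  have [ys [A h]] := UB mY Y0 EYfin atP HL att adm XsX E.
  by exists ys, A.
move=> ys A [hs _ pA hb].
have [al hle] := ALLOC mY Y0 adm XsX hs pA hb.
split => //; apply/le_anti/andP; split.
  by rewrite p1 hxs.
by apply: ereal_inf_lbound; exists (fun i w => (X w - xs) * \1_(A i) w + ys i).
Qed.
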